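(* For all $v,w\in\mathfrak{H}^0$, $Z_q^t(v\stackrel{t}{\ast}_\hbar w)=Z_q^t(v)\,Z_q^t(w)$.
   Context: Let $q$, $t$ be formal parameters and $[n]=\frac{1-q^n}{1-q}$. For positive integers $k_1,\dots,k_l$ with $k_1\ge 2$ put $\zeta_q(k_1,\dots,k_l)=\sum_{m_1>\cdots>m_l\ge1}\prod_{a=1}^l \frac{q^{(k_a-1)m_a}}{[m_a]^{k_a}}$. Define $\zeta_q^t(k_1,\dots,k_l)=\sum'_{\mathbf p}(1-q)^{k-\mathrm{wt}(\mathbf p)}\zeta_q(\mathbf p)\,t^{l-\mathrm{dep}(\mathbf p)}$, where $k=k_1+\cdots+k_l$, wt and dep denote the sum and the number of entries of an index, and $\mathbf p$ runs over all indices $(k_1\ \square\ k_2\ \square\cdots\square\ k_l)$ with each $\square$ filled by '','' , ''$+$'' or ''$-1+$''. Let $\hbar$ be a formal variable, $\mathfrak{H}=\mathbb{Q}[\hbar,t]\langle x,y\rangle$, $\mathfrak{H}^1=\mathbb{Q}[\hbar,t]+\mathfrak{H}y$, $\mathfrak{H}^0=\mathbb{Q}[\hbar,t]+x\mathfrak{H}y$, $z_j=x^{j-1}y$. Let $Z_q^t:\mathfrak{H}^0\to\mathbb{Q}[t][[q]]$ be the composition of the $\mathbb{Q}[\hbar,t]$-linear map $\widehat Z_q^t$ with $\widehat Z_q^t(1)=1$, $\widehat Z_q^t(z_{k_1}\cdots z_{k_l})=\zeta_q^t(k_1,\dots,k_l)$ ($k_1\ge2$), followed by the substitution $\hbar\mapsto1-q$.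 Let $z_i\circ_+ z_j=z_{i+j}+\hbar z_{i+j-1}$ on the $\mathbb{Q}[\hbar,t]$-span $\mathfrak z$ of the $z_j$, extended to an action on $\mathfrak{H}^1$ by $z_i\circ_+1=0$, $z_i\circ_+(z_jw)=(z_i\circ_+z_j)w$. The product $\stackrel{t}{\ast}_\hbar$ on $\mathfrak{H}^1$ is the $\mathbb{Q}[\hbar,t]$-bilinear product with $1\stackrel{t}{\ast}_\hbar w=w\stackrel{t}{\ast}_\hbar1=w$ and $z_iu\stackrel{t}{\ast}_\hbar z_jv=z_i(u\stackrel{t}{\ast}_\hbar z_jv)+z_j(z_iu\stackrel{t}{\ast}_\hbar v)+(1-2t)(z_i\circ_+z_j)(u\stackrel{t}{\ast}_\hbar v)+(t^2-t)\,z_i\circ_+z_j\circ_+(u\stackrel{t}{\ast}_\hbar v)$ for $i,j\ge1$ and words $u,v,w$ ($(z_i\circ_+z_j)X$ denotes concatenation; $z_i\circ_+z_j\circ_+X=(z_i\circ_+z_j)\circ_+X$). *)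

(* Defs.v *)
From mathcomp Require Import all_boot all_algebra.
Set Implicit Arguments. Unset Strict Implicit. Unset Printing Implicit Defensive.
Import GRing.Theory.
Local Open Scope ring_scope.

(* Coefficient rings:  Q[t] = {poly rat} (variable t),
   Q[hbar,t] = {poly {poly rat}} (outer variable hbar, inner variable t). *)
Definition Qt := {poly rat}.
Definition Qht := {poly {poly rat}}.
Definition tvar : Qt := 'X.
Definition hbar : Qht := 'X.

(* a series is its coefficient sequence: f n = coefficient of q^n *)
Definition ser := nat -> Qt.
Definition sone : ser := fun n => (n == 0%N)%:R.
Definition sscale (c : Qt) (f : ser) : ser := fun n => c * f n.
Definition smul (f g : ser) : ser := fun n => \sum_(i < n.+1) f i * g (n - i)%N.
Definition spow (f : ser) (k : nat) : ser := iter k (smul f) sone.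
Definition sq : ser := fun n => (n == 1%N)%:R.
Definition s1mq : ser := fun n => (n == 0%N)%:R - (n == 1%N)%:R.
(* 1/(1 - q^m)  (m >= 1) *)
Definition sgeom (m : nat) : ser := fun n => (m %| n)%:R.

(* q^{(k-1)m} / [m]^k = q^{(k-1)m} (1-q)^k / (1-q^m)^k *)
Definition sterm (k m : nat) : ser :=
  smul (spow sq ((k - 1) * m)%N) (smul (spow s1mq k) (spow (sgeom m) k)).

(* zpart ks M = sum_{M > m_1 > ... > m_l >= 1} prod_a q^{(k_a-1)m_a}/[m_a]^{k_a} *)
Fixpoint zpart (ks : seq nat) (M : nat) : ser :=
  match ks with
  | [::] => sone
  | k :: ks' => fun n => \sum_(1 <= m < M) smul (sterm k m) (zpart ks' m) n
  end.

(* zeta_q(k_1,...,k_l) for k_1 >= 2, as a formal power series in q.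
   The summand indexed by m_1 has q-order >= (k_1 - 1) m_1 >= m_1, so the
   (q-adically convergent) formal sum over m_1 >= 1 has coefficient of q^n
   equal to that of the finite partial sum over m_1 <= n. *)
Definition zeta_q (ks : seq nat) : ser := fun n => zpart ks n.+1 n.

(* all indices (k_1 [] k_2 [] ... [] k_l) with each [] one of "," "+" "-1+"
   (listed with multiplicity, one entry per filling) *)
Fixpoint fillings (ks : seq nat) : seq (seq nat) :=
  match ks with
  | [::] => [:: [::]]
  | [:: k] => [:: [:: k]]
  | k :: ks' =>
      flatten [seq (match p with
                    | [::] => [::]
                    | h :: tl => [:: k :: h :: tl; (k + h)%N :: tl; (k + h - 1)%N :: tl]
                    end) | p <- fillings ks']
  end.

Definition zeta_t (ks : seq nat) : ser := fun n =>
  \sum_(p <- fillings ks)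
     sscale (tvar ^+ (size ks - size p)%N)
            (smul (spow s1mq (sumn ks - sumn p)%N) (zeta_q p)) n.

(* A word of H^1 (a word in x,y ending in y, or the empty word) is written
   uniquely as z_{k_1} ... z_{k_l}, encoded as the list [:: k_1; ...; k_l]
   (k_a >= 1).  An element of H^1 is a finite formal Q[hbar,t]-linear
   combination of such words, encoded as a list of (coefficient, word). *)
Definition fsum := seq (Qht * seq nat).
Definition fscale (c : Qht) (X : fsum) : fsum := [seq (c * x.1, x.2) | x <- X].
Definition prefix (k : nat) (X : fsum) : fsum := [seq (x.1, k :: x.2) | x <- X].

(* z_k o+ w for a word w:  z_k o+ 1 = 0,
   z_k o+ (z_m w') = (z_k o+ z_m) w' = z_{k+m} w' + hbar z_{k+m-1} w' *)
Definition circ_word (k : nat) (w : seq nat) : fsum :=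
  if w is m :: w' then [:: (1, (k + m)%N :: w'); (hbar, (k + m - 1)%N :: w')] else [::].
Definition circ (k : nat) (X : fsum) : fsum :=
  flatten [seq fscale x.1 (circ_word k x.2) | x <- X].

Fixpoint tstar (u : seq nat) : seq nat -> fsum :=
  match u with
  | [::] => fun v => [:: (1, v)]
  | i :: u' =>
      fix tstar_u (v : seq nat) : fsum :=
        match v with
        | [::] => [:: (1, i :: u')]
        | j :: v' =>
            let uv := tstar u' v' in
            prefix i (tstar u' (j :: v'))
            ++ prefix j (tstar_u v')
            (* (1-2t) (z_i o+ z_j)(u * v) *)
            ++ fscale (1 - 2%:R * tvar)%:P
                      (prefix (i + j)%N uv ++ fscale hbar (prefix (i + j - 1)%N uv))
            (* (t^2 - t) z_i o+ z_j o+ (u * v) *)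
            ++ fscale (tvar ^+ 2 - tvar)%:P
                      (circ (i + j)%N uv ++ fscale hbar (circ (i + j - 1)%N uv))
        end
  end.

Definition star (v w : fsum) : fsum :=
  flatten [seq fscale (x.1 * y.1) (tstar x.2 y.2) | x <- v, y <- w].

Definition eval_hbar (c : Qht) : ser := fun n =>
  \sum_(i < size c) sscale c`_i (spow s1mq i) n.

Definition Zqt (v : fsum) : ser := fun n =>
  \sum_(x <- v) smul (eval_hbar x.1) (zeta_t x.2) n.

Definition admissible_word (a : seq nat) : bool :=
  all (fun k => 0 < k)%N a && (if a is k :: _ then (1 < k)%N else true).
Definition in_H0 (v : fsum) : bool := all (fun x => admissible_word x.2) v.

(* Main.v *)
From HB Require Import structures.
Require Import Defs.
From mathcomp Require Import all_boot all_algebra.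
From mathcomp Require Import boolp.
From mathcomp Require Import ring zify.
Set Implicit Arguments. Unset Strict Implicit. Unset Printing Implicit Defensive.
Import GRing.Theory.
Local Open Scope ring_scope.
Local Notation prefix := Defs.prefix.


Definition S := ser.
HB.instance Definition _ := gen_eqMixin S.
HB.instance Definition _ := gen_choiceMixin S.

Definition szero : S := fun _ => 0.
Definition sadd (f g : S) : S := fun n => f n + g n.
Definition sopp (f : S) : S := fun n => - f n.

Lemma saddA : associative sadd.
Proof. by move=> f g h; apply: funext => n; rewrite /sadd addrA. Qed.
Lemma saddC : commutative sadd.
Proof. by move=> f g; apply: funext => n; rewrite /sadd addrC. Qed.
Lemma sadd0 : left_id szero sadd.
Proof. by move=> f; apply: funext => n; rewrite /sadd /szero add0r. Qed.
Lemma saddN : left_inverse szero sopp sadd.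
Proof. by move=> f; apply: funext => n; rewrite /sadd /szero /sopp addNr. Qed.
HB.instance Definition _ := GRing.isZmodule.Build S saddA saddC sadd0 saddN.

Definition trp (n : nat) (f : S) : {poly Qt} := \poly_(i < n.+1) f i.

Lemma smul_poly n (f g : S) (P Q : {poly Qt}) :
  (forall i, (i <= n)%N -> P`_i = f i) -> (forall i, (i <= n)%N -> Q`_i = g i) ->
  smul f g n = (P * Q)`_n.
Proof.
move=> hP hQ; rewrite coefM /smul; apply: eq_bigr => i _.
by rewrite hP ?hQ // ?leq_subr // -ltnS.
Qed.

Lemma trpE n f i : (i <= n)%N -> (trp n f)`_i = f i.
Proof. by move=> hi; rewrite coef_poly ltnS hi. Qed.

Lemma smul_trp n k f g : (k <= n)%N -> smul f g k = (trp n f * trp n g)`_k.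
Proof.
move=> hk; apply: smul_poly => i hi; apply: trpE; exact: leq_trans hi hk.
Qed.

Lemma smulA : associative smul.
Proof.
move=> f g h; apply: funext => n.
rewrite (@smul_poly n f _ (trp n f) (trp n g * trp n h)); last 2 first.
- by move=> i hi; rewrite trpE.
- by move=> i hi; rewrite (smul_trp (n:=n)).
rewrite (@smul_poly n _ h (trp n f * trp n g) (trp n h)); last 2 first.
- by move=> i hi; rewrite (smul_trp (n:=n)).
- by move=> i hi; rewrite trpE.
by rewrite mulrA.
Qed.

Lemma smulC : commutative smul.
Proof.
move=> f g; apply: funext => n.
by rewrite (smul_trp f g (leqnn n)) (smul_trp g f (leqnn n)) mulrC.
Qed.

Lemma smul1 : left_id sone smul.
Proof.
move=> f; apply: funext => n.
rewrite (@smul_poly n _ _ 1 (trp n f)); last 2 first.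
- by move=> i _; rewrite coef1 /sone.
- by move=> i hi; rewrite trpE.
by rewrite mul1r trpE.
Qed.

Lemma smulDl : left_distributive smul sadd.
Proof.
move=> f g h; apply: funext => n.
rewrite /sadd (smul_trp _ _ (leqnn n)) (smul_trp f _ (leqnn n)) (smul_trp g _ (leqnn n)).
rewrite -coefD -mulrDl.
have -> : trp n (sadd f g) = trp n f + trp n g.
  by apply/polyP => i; rewrite coefD !coef_poly; case: ifP => //; rewrite addr0.
by [].
Qed.

Lemma sone_neq0 : sone != szero.
Proof.
apply/eqP => /(congr1 (fun f => f 0%N)); rewrite /sone /szero /=.
by move/eqP; rewrite oner_eq0.
Qed.

HB.instance Definition _ := GRing.Zmodule_isComNzRing.Build S smulA smulC smul1 smulDl sone_neq0.

Lemma mulSE (f g : S) : f * g = smul f g. Proof. by []. Qed.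
Lemma addSE (f g : S) n : (f + g) n = f n + g n. Proof. by []. Qed.
Lemma oneSE : (1 : S) = sone. Proof. by []. Qed.
Lemma sumSE I (r : seq I) (P : pred I) (F : I -> S) n :
  (\sum_(i <- r | P i) F i) n = \sum_(i <- r | P i) F i n.
Proof. by elim/big_rec2: _ => // i x y _ <-. Qed.
Lemma spowE (f : S) k : spow f k = f ^+ k.
Proof. by elim: k => // k IH; rewrite exprS -IH. Qed.

Goal forall x y : S, (x + y) * (x - y) = x * x - y * y.
Proof. move=> x y. ring. Qed.


Definition cst (c : Qt) : S := sscale c sone.

Lemma cstM_l c (f : S) n : (cst c * f) n = c * f n.
Proof.
rewrite mulSE /smul big_ord_recl /= /cst /sscale /sone /= mulr1 subn0.
rewrite big1 ?addr0 // => i _; by rewrite mulr0 mul0r.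
Qed.

Lemma sscaleE c (f : S) : sscale c f = cst c * f.
Proof. by apply: funext => n; rewrite cstM_l. Qed.

Lemma cst_is_zmod : zmod_morphism cst.
Proof. by move=> a b; apply: funext => n; rewrite /cst /sscale /= mulrBl. Qed.
Lemma cst_is_monoid : monoid_morphism cst.
Proof.
split; first by apply: funext => n; rewrite /cst /sscale mul1r.
by move=> a b; apply: funext => n; rewrite cstM_l /cst /sscale mulrA.
Qed.
HB.instance Definition _ := GRing.isZmodMorphism.Build Qt S cst cst_is_zmod.
HB.instance Definition _ := GRing.isMonoidMorphism.Build Qt S cst cst_is_monoid.

Lemma cst_inj : injective cst.
Proof. move=> a b /(congr1 (fun f : S => f 0%N)); by rewrite /cst /sscale /sone /= !mulr1. Qed.

Lemma subSE (f g : S) n : (f - g) n = f n - g n. Proof. by []. Qed.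

Definition h : S := s1mq.
Definition q : S := sq.
Lemma hE : h = 1 - q. Proof. by []. Qed.

Lemma qM_coef (f : S) n : (q * f) n = if (1 <= n)%N then f (n - 1)%N else 0.
Proof.
rewrite mulSE /smul big_ord_recl /q /sq /= mul0r add0r.
case: n => [|n]; first by rewrite big_ord0.
rewrite big_ord_recl /= mul1r subSS subn0 big1 ?addr0 //.
by move=> i _; rewrite /bump /= mul0r.
Qed.

Lemma qXM_coef a (f : S) n : (q ^+ a * f) n = if (a <= n)%N then f (n - a)%N else 0.
Proof.
elim: a n => [|a IH] n; first by rewrite expr0 mul1r subn0.
rewrite exprS -mulrA qM_coef; case: n => [|n] //=.
rewrite subSS subn0 IH; case: ifP => // _; by rewrite subnS.
Qed.

Definition G m : S := sgeom m.

Lemma G_inv m : (0 < m)%N -> G m * (1 - q ^+ m) = 1.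
Proof.
move=> hm; rewrite mulrBr mulr1 (mulrC (G m)); apply: funext => n.
rewrite subSE qXM_coef /G /sgeom oneSE /sone.
case: leqP => hmn.
- have -> : (m %| n)%N = (m %| n - m)%N.
    by rewrite -{1}(subnK hmn) dvdn_addl.
  have -> : (n == 0)%N = false by apply/eqP; lia.
  by rewrite subrr.
- case: n hmn => [|n] hmn; first by rewrite dvdn0 subr0.
  have -> : (m %| n.+1)%N = false by apply/negbTE; rewrite gtnNdvd.
  by rewrite subr0.
Qed.

Definition f k m : S := sterm k m.
Lemma fE k m : f k m = q ^+ ((k - 1) * m) * (h ^+ k * G m ^+ k).
Proof. by rewrite /f /sterm !spowE. Qed.

Lemma f_rel i j m : (0 < i)%N -> (0 < j)%N -> (0 < m)%N ->
  f i m * f j m = f (i + j) m + h * f (i + j - 1) m.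
Proof.
case: i => // i; case: j => // j _ _ hm.
have e1 : (i.+1 + j.+1 - 1 = (i + j).+1)%N by lia.
rewrite e1 !fE !subn1 /= addSn /=.
rewrite !(mulnC _ m) !exprM ?addnS !exprS !exprD.
set Q := q ^+ m; set g := G m.
have hg := G_inv hm; rewrite -/Q -/g in hg.
apply/eqP; rewrite -subr_eq0; apply/eqP.
transitivity (Q ^+ i * Q ^+ j * h ^+ i * h ^+ j * h * h * g ^+ i * g ^+ j * g * (g * (1 - Q) - 1)).
  ring.
by rewrite hg subrr mulr0.
Qed.


Definition zp (p : seq nat) (M : nat) : S := zpart p M.
Arguments zp : simpl never.
Lemma zpart_nil M : zp [::] M = 1. Proof. by []. Qed.
Lemma zpart_cons k ks M : zp (k :: ks) M = \sum_(1 <= m < M) f k m * zp ks m.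
Proof. by apply: funext => n; rewrite sumSE. Qed.

Definition pos (w : seq nat) := all (fun k => 0 < k)%N w.

Lemma fillings_cons k w : fillings (k :: w) =
  if w is [::] then [:: [:: k]] else
  flatten [seq (match p with
                    | [::] => [::]
                    | h :: tl => [:: k :: h :: tl; (k + h)%N :: tl; (k + h - 1)%N :: tl]
                    end) | p <- fillings w].
Proof. by case: w. Qed.

Lemma fillings_cons2 k k' w : fillings (k :: k' :: w) =
  flatten [seq (match p with
                    | [::] => [::]
                    | h :: tl => [:: k :: h :: tl; (k + h)%N :: tl; (k + h - 1)%N :: tl]
                    end) | p <- fillings (k' :: w)].
Proof. by []. Qed.

Lemma fill_props w p : pos w -> p \in fillings w ->
  [/\ pos p, (size p <= size w)%N, (sumn p <= sumn w)%N & (w == [::]) = (p == [::])].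
Proof.
elim: w p => [|k w IH] p; first by rewrite /= inE => _ /eqP ->.
move=> /andP [hk hw]; rewrite fillings_cons.
case: w IH hw => [|k' w] IH hw.
  by rewrite inE => /eqP -> /=; rewrite hk.
move=> /flatten_mapP [p' hp' hp].
have [pp' sp' sm' e'] := IH p' hw hp'.
case: p' hp' pp' sp' sm' e' hp => // h0 tl hp' /= /andP [h0p tlp] sp' sm' _.
rewrite !inE => /or3P [] /eqP -> /=.
- by rewrite hk h0p tlp; split => //=; lia.
- rewrite tlp andbT; split => //; [lia | lia | lia].
- rewrite tlp andbT; split => //; [lia | lia | lia].
Qed.

Definition tau : S := cst tvar.
Definition wt (w p : seq nat) : S := cst (tvar ^+ (size w - size p)) * h ^+ (sumn w - sumn p).

Definition Zt (M : nat) (w : seq nat) : S :=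
  \sum_(p <- fillings w) wt w p * zp p M.

Lemma Zt_nil M : Zt M [::] = 1.
Proof. by rewrite /Zt /= big_cons big_nil /wt /= expr0 rmorph1 !mul1r addr0. Qed.

Lemma zpart_step h0 tl m : (0 < m)%N -> zp (h0 :: tl) m.+1 = zp (h0 :: tl) m + f h0 m * zp tl m.
Proof. by move=> hm; rewrite !zpart_cons big_nat_recr. Qed.

Lemma Zt_cons k w M : pos (k :: w) ->
  Zt M (k :: w) = \sum_(1 <= m < M) f k m * ((1 - tau) * Zt m w + tau * Zt m.+1 w).
Proof.
move=> /andP [hk hw].
case: w hw => [|k' w] hw.
  rewrite {1}/Zt fillings_cons big_cons big_nil /wt !subnn expr0 rmorph1 !mul1r addr0 zpart_cons.
  by apply: eq_bigr => m _; rewrite !Zt_nil zpart_nil; ring.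
rewrite /Zt fillings_cons2 big_flatten big_map.
set w0 := k' :: w.
have hw0 : pos w0 := hw.
transitivity (\sum_(p <- fillings w0) \sum_(1 <= m < M) wt w0 p * (f k m * ((1 - tau) * zp p m + tau * zp p m.+1))).
  rewrite big_seq [RHS]big_seq; apply: eq_bigr => p hp.
  have [pp sp sm e] := fill_props hw0 hp.
  case: p e hp pp sp sm => // h0 tl _ hp /andP [h0p tlp] sp sm.
  rewrite !big_cons big_nil /= addr0 !zpart_cons.
  have -> : wt (k :: w0) (k :: h0 :: tl) = wt w0 (h0 :: tl).
    by rewrite /wt /= subSS; congr (_ * _ ^+ _); lia.
  have -> : wt (k :: w0) ((k + h0)%N :: tl) = tau * wt w0 (h0 :: tl).
    have -> : tau * wt w0 (h0 :: tl) = cst (tvar ^+ (size w0 - size (h0 :: tl)).+1) * h ^+ (sumn w0 - sumn (h0 :: tl)).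
      by rewrite /wt /tau exprS rmorphM; ring.
    rewrite /wt; congr (cst (_ ^+ _) * _ ^+ _); rewrite /= in sp sm *; lia.
  have -> : wt (k :: w0) ((k + h0 - 1)%N :: tl) = tau * h * wt w0 (h0 :: tl).
    have -> : tau * h * wt w0 (h0 :: tl) = cst (tvar ^+ (size w0 - size (h0 :: tl)).+1) * h ^+ (sumn w0 - sumn (h0 :: tl)).+1.
      by rewrite /wt /tau !exprS rmorphM; ring.
    rewrite /wt; congr (cst (_ ^+ _) * _ ^+ _); rewrite /= in sp sm *; lia.
  rewrite !big_distrr /= -!big_split /=.
  apply: eq_big_nat => m /andP [hm _].
  rewrite zpart_step //.
  have hr := f_rel hk h0p hm.
  have -> : f (k + h0) m * zp tl m = (f k m * f h0 m - h * f (k + h0 - 1) m) * zp tl m.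
    by rewrite hr addrK.
  ring.
rewrite exchange_big /=; apply: eq_bigr => m _.
rewrite !mulr_sumr -big_split /= mulr_sumr; apply: eq_bigr => p _; ring.
Qed.

Lemma Zt_succ k w M : pos (k :: w) -> (0 < M)%N ->
  Zt M.+1 (k :: w) = Zt M (k :: w) + f k M * ((1 - tau) * Zt M w + tau * Zt M.+1 w).
Proof. by move=> hp hM; rewrite !Zt_cons // big_nat_recr. Qed.

Lemma Zt1 k w : pos (k :: w) -> Zt 1 (k :: w) = 0.
Proof. by move=> hp; rewrite Zt_cons // big_geq. Qed.



Definition Ev (c : Qht) : S := (map_poly cst c).[h].

Lemma Ev1 : Ev 1 = 1. Proof. by rewrite /Ev rmorph1 hornerC. Qed.
Lemma EvM a b : Ev (a * b) = Ev a * Ev b. Proof. by rewrite /Ev rmorphM hornerM. Qed.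
Lemma EvC c : Ev c%:P = cst c. Proof. by rewrite /Ev map_polyC hornerC. Qed.
Lemma EvX : Ev hbar = h. Proof. by rewrite /Ev /hbar map_polyX hornerX. Qed.

Lemma eval_hbarE c : (eval_hbar c : S) = Ev c.
Proof.
rewrite /Ev horner_coef size_map_inj_poly; last 2 first.
- exact: cst_inj.
- exact: rmorph0.
apply: funext => n; rewrite /eval_hbar sumSE; apply: eq_bigr => i _.
by rewrite coef_map sscaleE spowE.
Qed.

Definition posX (X : fsum) := all (fun x => pos x.2) X.

Definition ZX M (X : fsum) : S := \sum_(x <- X) Ev x.1 * Zt M x.2.

Lemma ZX_cat M X Y : ZX M (X ++ Y) = ZX M X + ZX M Y.
Proof. by rewrite /ZX big_cat. Qed.
Lemma ZX_scale M c X : ZX M (fscale c X) = Ev c * ZX M X.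
Proof. by rewrite /ZX big_map mulr_sumr; apply: eq_bigr => x _ /=; rewrite EvM mulrA. Qed.

Lemma ZX_prefix_succ M k X : (0 < M)%N -> (0 < k)%N -> posX X ->
  ZX M.+1 (prefix k X) = ZX M (prefix k X) + f k M * ((1 - tau) * ZX M X + tau * ZX M.+1 X).
Proof.
move=> hM hk hX; rewrite /ZX !big_map !mulr_sumr -big_split /= mulr_sumr -big_split /=.
rewrite big_seq [RHS]big_seq; apply: eq_bigr => x hx.
have hp : pos (k :: x.2) by rewrite /= hk; exact: (allP hX x hx).
rewrite Zt_succ //; ring.
Qed.

Lemma ZX_circ_succ M k X : (0 < M)%N -> (0 < k)%N -> posX X ->
  ZX M.+1 (circ k X) = ZX M (circ k X) + f k M * (ZX M.+1 X - ZX M X).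
Proof.
move=> hM hk hX; rewrite /ZX /circ !big_flatten !big_map /=.
rewrite -sumrB mulr_sumr -big_split /=.
rewrite big_seq [RHS]big_seq; apply: eq_bigr => x hx.
have hp : pos x.2 := allP hX x hx.
rewrite !big_map /=.
case: x hx hp => c [|m w] hx hp /=.
  by rewrite !big_nil !Zt_nil subrr !mulr0 addr0.
move: hp => /andP [hm hw].
rewrite !big_cons !big_nil !addr0 !EvM EvX Ev1.
have p1 : pos ((k + m)%N :: w) by apply/andP; split => //; lia.
have p2 : pos ((k + m - 1)%N :: w) by apply/andP; split => //; lia.
have p3 : pos (m :: w) by apply/andP; split.
rewrite !Zt_succ //.
have hr := f_rel hk hm hM.
have -> : f (k + m) M = f k M * f m M - h * f (k + m - 1) M by rewrite hr addrK.
ring.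
Qed.

Lemma ZX1_prefix k X : (0 < k)%N -> posX X -> ZX 1 (prefix k X) = 0.
Proof.
move=> hk hX; rewrite /ZX big_map big_seq big1 // => x hx.
by rewrite Zt1 ?mulr0 //= hk; exact: (allP hX x hx).
Qed.

Lemma ZX1_circ k X : (0 < k)%N -> posX X -> ZX 1 (circ k X) = 0.
Proof.
move=> hk hX; rewrite /ZX /circ big_flatten big_map big_seq big1 // => x hx.
have hp : pos x.2 := allP hX x hx.
rewrite big_map; case: x hx hp => c [|m w] hx hp /=; first by rewrite big_nil.
move: hp => /andP [hm hw].
have p1 : pos ((k + m)%N :: w) by apply/andP; split => //; lia.
have p2 : pos ((k + m - 1)%N :: w) by apply/andP; split => //; lia.
by rewrite !big_cons big_nil !Zt1 // !mulr0 !addr0.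
Qed.

Lemma posX_cat X Y : posX (X ++ Y) = posX X && posX Y.
Proof. by rewrite /posX all_cat. Qed.
Lemma posX_scale c X : posX (fscale c X) = posX X.
Proof. by rewrite /posX all_map. Qed.
Lemma posX_prefix k X : (0 < k)%N -> posX X -> posX (prefix k X).
Proof. by move=> hk hX; rewrite /posX all_map; apply/allP => x hx /=; rewrite hk (allP hX x hx). Qed.
Lemma posX_circ k X : (0 < k)%N -> posX X -> posX (circ k X).
Proof.
move=> hk hX; apply/allP => y /flatten_mapP [x hx].
have := allP hX x hx; case: x hx => c [|m w] hx //= /andP [hm hw].
by rewrite !inE => /orP [] /eqP -> /=; rewrite hw andbT; lia.
Qed.

Lemma tstar_cons i u' j v' : tstar (i :: u') (j :: v') =
  prefix i (tstar u' (j :: v'))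
  ++ prefix j (tstar (i :: u') v')
  ++ fscale (1 - 2%:R * tvar)%:P
       (prefix (i + j)%N (tstar u' v') ++ fscale hbar (prefix (i + j - 1)%N (tstar u' v')))
  ++ fscale (tvar ^+ 2 - tvar)%:P
       (circ (i + j)%N (tstar u' v') ++ fscale hbar (circ (i + j - 1)%N (tstar u' v'))).
Proof. by []. Qed.

Lemma tstar_nil_l v : tstar [::] v = [:: (1, v)]. Proof. by []. Qed.
Lemma tstar_nil_r u : tstar u [::] = [:: (1, u)]. Proof. by case: u. Qed.

Lemma tstar_pos u v : pos u -> pos v -> posX (tstar u v).
Proof.
move: {2}(size u + size v)%N (leqnn (size u + size v)%N) => n.
elim: n u v => [|n IH] u v hs hu hv.
all: case: u hs hu => [|i u'] hs hu; first by rewrite tstar_nil_l; apply/andP.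
all: case: v hs hv => [|j v'] hs hv; first by rewrite tstar_nil_r; apply/andP.
  by rewrite /= in hs; lia.
move: (hu) (hv) => /andP [hi hu'] /andP [hj hv'].
have huv := IH u' v' ltac:(rewrite /= in hs; lia) hu' hv'.
have h1 := IH u' (j :: v') ltac:(rewrite /= in hs *; lia) hu' hv.
have h2 := IH (i :: u') v' ltac:(rewrite /= in hs *; lia) hu hv'.
rewrite tstar_cons !posX_cat !posX_scale !posX_cat !posX_scale.
rewrite !posX_prefix ?posX_circ //; lia.
Qed.



Lemma Ev_c1 : Ev (1 - 2%:R * tvar)%:P = 1 - 2%:R * tau.
Proof. by rewrite EvC rmorphB rmorph1 rmorphM rmorph_nat. Qed.
Lemma Ev_c2 : Ev (tvar ^+ 2 - tvar)%:P = tau ^+ 2 - tau.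
Proof. by rewrite EvC rmorphB rmorphXn. Qed.

Lemma ZX_single M w : ZX M [:: (1, w)] = Zt M w.
Proof. by rewrite /ZX big_cons big_nil Ev1 mul1r addr0. Qed.

Lemma ZX_succ_tstar M i u' j v' : (0 < M)%N -> pos (i :: u') -> pos (j :: v') ->
  ZX M.+1 (tstar (i :: u') (j :: v')) = ZX M (tstar (i :: u') (j :: v'))
   + f i M * ((1 - tau) * ZX M (tstar u' (j :: v')) + tau * ZX M.+1 (tstar u' (j :: v')))
   + f j M * ((1 - tau) * ZX M (tstar (i :: u') v') + tau * ZX M.+1 (tstar (i :: u') v'))
   + (1 - 2%:R * tau) * (f (i + j) M * ((1 - tau) * ZX M (tstar u' v') + tau * ZX M.+1 (tstar u' v'))
                        + h * (f (i + j - 1) M * ((1 - tau) * ZX M (tstar u' v') + tau * ZX M.+1 (tstar u' v'))))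
   + (tau ^+ 2 - tau) * (f (i + j) M * (ZX M.+1 (tstar u' v') - ZX M (tstar u' v'))
                        + h * (f (i + j - 1) M * (ZX M.+1 (tstar u' v') - ZX M (tstar u' v')))).
Proof.
move=> hM hu hv.
set X1 := tstar u' (j :: v'); set X2 := tstar (i :: u') v'; set uv := tstar u' v'.
move: (hu) (hv) => /andP [hi hu'] /andP [hj hv'].
have p1 : posX X1 by apply: tstar_pos.
have p2 : posX X2 by apply: tstar_pos.
have p3 : posX uv by apply: tstar_pos.
have hij : (0 < i + j)%N by lia.
have hij1 : (0 < i + j - 1)%N by lia.
rewrite !tstar_cons -/X1 -/X2 -/uv !ZX_cat !ZX_scale !ZX_cat !ZX_scale EvX Ev_c1 Ev_c2.
rewrite !ZX_prefix_succ // !ZX_circ_succ //.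
ring.
Qed.

Lemma tstar_mult1 u v : pos u -> pos v -> ZX 1 (tstar u v) = Zt 1 u * Zt 1 v.
Proof.
case: u => [|i u'] hu; first by rewrite tstar_nil_l ZX_single Zt_nil mul1r.
case: v => [|j v'] hv; first by rewrite tstar_nil_r ZX_single Zt_nil mulr1.
move: (hu) (hv) => /andP [hi hu'] /andP [hj hv'].
have p1 : posX (tstar u' (j :: v')) by apply: tstar_pos.
have p2 : posX (tstar (i :: u') v') by apply: tstar_pos.
have p3 : posX (tstar u' v') by apply: tstar_pos.
have hij : (0 < i + j)%N by lia.
have hij1 : (0 < i + j - 1)%N by lia.
rewrite tstar_cons !ZX_cat !ZX_scale !ZX_cat !ZX_scale !ZX1_prefix // !ZX1_circ //.
by rewrite (Zt1 hu) (Zt1 hv) !(mulr0, addr0, add0r).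
Qed.

Lemma tstar_mult_step M : (0 < M)%N ->
  (forall u v, pos u -> pos v -> ZX M (tstar u v) = Zt M u * Zt M v) ->
  forall u v, pos u -> pos v -> ZX M.+1 (tstar u v) = Zt M.+1 u * Zt M.+1 v.
Proof.
move=> hM IHM u v.
move: {2}(size u + size v)%N (leqnn (size u + size v)%N) => n.
elim: n u v => [|n IH] u v hs hu hv.
all: case: u hs hu => [|i u'] hs hu; first by rewrite tstar_nil_l ZX_single Zt_nil mul1r.
all: case: v hs hv => [|j v'] hs hv; first by rewrite tstar_nil_r ZX_single Zt_nil mulr1.
  by rewrite /= in hs; lia.
move: (hu) (hv) => /andP [hi hu'] /andP [hj hv'].
rewrite ZX_succ_tstar //.
rewrite !IHM //.
rewrite (IH u' v') ?(IH u' (j :: v')) ?(IH (i :: u') v') //; try (rewrite /= in hs *; lia).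
rewrite !Zt_succ //.
have hr := f_rel hi hj hM.
have -> : f (i + j) M = f i M * f j M - h * f (i + j - 1) M by rewrite hr addrK.
ring.
Qed.

Lemma tstar_mult M : (0 < M)%N ->
  forall u v, pos u -> pos v -> ZX M (tstar u v) = Zt M u * Zt M v.
Proof.
case: M => // M _; elim: M => [|M IH]; first exact: tstar_mult1.
exact: tstar_mult_step.
Qed.



Lemma smul_congr (a a' b b' : ser) n :
  (forall j, (j <= n)%N -> a j = a' j) -> (forall j, (j <= n)%N -> b j = b' j) ->
  smul a b n = smul a' b' n.
Proof.
move=> ha hb; apply: eq_bigr => i _; rewrite ha ?hb //; [exact: leq_subr | by rewrite -ltnS].
Qed.

Lemma f_coef_high k m (g : S) i : (1 < k)%N -> (i < m)%N -> (f k m * g) i = 0.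
Proof.
move=> hk hi; rewrite fE -mulrA qXM_coef; case: leqP => // hle.
have : (m <= (k - 1) * m)%N by rewrite leq_pmull // subn_gt0.
lia.
Qed.

Lemma zp_trunc p N i : (if p is k :: _ then (1 < k)%N else true) -> (i < N)%N ->
  zp p N i = zpart p i.+1 i.
Proof.
case: p => [|k tl] hk hi; first by [].
have -> : zpart (k :: tl) i.+1 i = zp (k :: tl) i.+1 i by [].
rewrite !zpart_cons (@big_cat_nat _ _ _ i.+1 1 N) //=.
rewrite addSE [X in _ + X = _]sumSE [X in _ + X = _]big1_seq ?addr0 // => m /andP [_].
rewrite mem_index_iota => /andP [hm _]; exact: f_coef_high.
Qed.

Lemma fill_head k w p : pos (k :: w) -> p \in fillings (k :: w) ->
  exists k' tl, p = k' :: tl /\ (k <= k')%N.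
Proof.
move=> /andP [hk hw]; case: w hw => [|k0 w] hw.
  by rewrite /= inE => /eqP ->; exists k, [::].
rewrite fillings_cons2 => /flatten_mapP [p' hp' hp].
have hw0 : pos (k0 :: w) := hw.
have [pp _ _ e] := fill_props hw0 hp'.
case: p' hp' pp e hp => // h0 tl _ /andP [h0p _] _.
rewrite !inE => /or3P [] /eqP ->; [exists k | exists (k + h0)%N | exists (k + h0 - 1)%N];
  eexists; split; try reflexivity; lia.
Qed.

Definition adm (w : seq nat) := pos w && (if w is k :: _ then (1 < k)%N else true).

Lemma zeta_t_trunc w N i : adm w -> (i < N)%N -> zeta_t w i = Zt N w i.
Proof.
move=> /andP [hw hk] hi; rewrite /zeta_t /Zt sumSE big_seq [RHS]big_seq.
apply: eq_bigr => p hp.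
have hph : is_true (if p is k :: _ then (1 < k)%N else true).
  case: w hw hk hp => [|k w] hw hk hp; first by move: hp; rewrite /= inE => /eqP ->.
  have [k' [tl [-> hkk]]] := fill_head hw hp; lia.
rewrite /wt -mulrA cstM_l /sscale; congr (_ * _).
rewrite spowE mulSE; apply: smul_congr => // j hj.
rewrite /zeta_q zp_trunc //; lia.
Qed.

Lemma Zqt_trunc X N i : all (fun x => adm x.2) X -> (i < N)%N -> Zqt X i = ZX N X i.
Proof.
move=> hX hi; rewrite /Zqt /ZX sumSE big_seq [RHS]big_seq; apply: eq_bigr => x hx.
rewrite mulSE eval_hbarE; apply: smul_congr => // j hj.
apply: zeta_t_trunc; [exact: (allP hX x hx) | lia].
Qed.

Definition hge (a : nat) (X : fsum) := all (fun x => if x.2 is k :: _ then (a <= k)%N else false) X.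

Lemma hge_cat a X Y : hge a (X ++ Y) = hge a X && hge a Y.
Proof. by rewrite /hge all_cat. Qed.
Lemma hge_scale a c X : hge a (fscale c X) = hge a X.
Proof. by rewrite /hge all_map. Qed.
Lemma hge_prefix a k X : (a <= k)%N -> hge a (prefix k X).
Proof. by move=> hk; rewrite /hge all_map; apply/allP => x _ /=. Qed.
Lemma hge_circ a k X : (a <= k)%N -> posX X -> hge a (circ k X).
Proof.
move=> hk hX; apply/allP => y /flatten_mapP [x hx].
have := allP hX x hx; case: x hx => c [|m w] hx //= /andP [hm hw].
by rewrite !inE => /orP [] /eqP -> /=; lia.
Qed.

Lemma tstar_adm u v : adm u -> adm v -> all (fun x => adm x.2) (tstar u v).
Proof.
move=> hu hv.
case: u hu => [|i u'] hu; first by rewrite tstar_nil_l /= andbT.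
case: v hv => [|j v'] hv; first by rewrite tstar_nil_r /= andbT.
move: (hu) (hv) => /andP [pu hi] /andP [pv hj].
have hp := tstar_pos pu pv.
have hh : hge (minn i j) (tstar (i :: u') (j :: v')).
  move: (pu) (pv) => /andP [hi0 pu'] /andP [hj0 pv'].
  have p3 : posX (tstar u' v') by apply: tstar_pos.
  rewrite tstar_cons !hge_cat !hge_scale !hge_cat !hge_scale.
  rewrite !hge_prefix ?hge_circ //; lia.
apply/allP => x hx; rewrite /adm (allP hp x hx) /=.
have := allP hh x hx; case: x.2 => // k; lia.
Qed.

Lemma star_adm v w : all (fun x => adm x.2) v -> all (fun x => adm x.2) w ->
  all (fun x => adm x.2) (star v w).
Proof.
move=> hv hw; apply/allP => z /flattenP [Y /allpairsPdep [x [y [hx hy ->]]]].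
move=> /mapP [z' hz' ->] /=.
exact: (allP (tstar_adm (allP hv x hx) (allP hw y hy)) z' hz').
Qed.

Lemma ZX_star N v w : (0 < N)%N -> all (fun x => adm x.2) v -> all (fun x => adm x.2) w ->
  ZX N (star v w) = ZX N v * ZX N w.
Proof.
move=> hN hv hw; rewrite /star /ZX big_flatten big_allpairs_dep /= big_distrl /=.
rewrite big_seq [RHS]big_seq; apply: eq_bigr => x hx.
rewrite big_distrr /= big_seq [RHS]big_seq; apply: eq_bigr => y hy.
have := ZX_scale N (x.1 * y.1) (tstar x.2 y.2); rewrite /ZX => ->.
have /andP [px _] := allP hv x hx; have /andP [py _] := allP hw y hy.
have e := tstar_mult hN px py; rewrite /ZX in e; rewrite e EvM; ring.
Qed.

Theorem proposition2p5 (v w : fsum) :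
  in_H0 v -> in_H0 w ->
  forall n : nat, Zqt (star v w) n = smul (Zqt v) (Zqt w) n.
Proof.
move=> hv hw n.
have hv' : all (fun x => adm x.2) v := hv.
have hw' : all (fun x => adm x.2) w := hw.
rewrite (@Zqt_trunc _ n.+1) ?star_adm // ZX_star // mulSE.
by apply: smul_congr => j hj; rewrite (@Zqt_trunc _ n.+1).
Qed.
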